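(* Let $G$ be a symmetric diagonal game. Then the Rawlsian equilibria, Bentham-Hars\'anyi equilibria, best-off equilibria, Rawlsian percentile equilibria and aspiration equilibria of $G$ each coincide with the convex combinations (probability distributions) of pure Kantian equilibria of $G$.
   Context: All $n$ players have the same finite action set $A$. The game is symmetric if for every player $i$, every pure profile $(x_1,\ldots,x_n)$ and every permutation $\sigma$ of $\{1,\ldots,n\}$, $u_{\sigma(i)}(x_1,\ldots,x_n)=u_i(x_{\sigma(1)},\ldots,x_{\sigma(n)})$. The diagonal is the set of profiles $(a,\ldots,a)$. For vectors, $x$ dominates $y$ if $x_j\ge y_j$ for all $j$, strictly if some inequality is strict; profiles and distributions are compared via their vectors of (expected) player utilities. The game is diagonal if every pure profile is Pareto dominated by some diagonal profile. A pure Kantian equilibrium is a diagonal profile $(a,\ldots,a)$ with $u_i(a,\ldots,a)\ge u_i(b,\ldots,b)$ for every player $i$ and every $b\in A$. A pure profile is Pareto optimal if no pure profile strictly dominates it. The equilibria are probability distributions over pure profiles: Rawlsian: supported on Pareto optimal profiles, maximizing the minimum expected utility over players, and strictly dominated by no other distribution with this property. Bentham-Hars\'anyi: supported on Pareto optimal profiles, maximizing the sum of expected payoffs. Best-off: supported on Pareto optimal profiles, maximizing the largest expected payoff, strictly dominated by no distribution with this property. The percentile index of a pure profile $a$ for player $i$ is the percentage of Pareto optimal profiles giving $i$ a strictly better payoff than $a$; Rawlsian percentile: supported on Pareto optimal profiles, minimizing the largest expected percentile index, strictly dominated by no distribution with this property. The natural expectation point of player $i$ is the median of its payoffs over undominated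 pure profiles (average of the two medians if there are two); $i$ is happy in $a$ if $u_i(a)$ is at least this point, unhappy otherwise; aspiration equilibrium: a distribution minimizing the largest probability of unhappiness among players, strictly dominated by no distribution with this property. *)

(* Defs.v *)
From HB Require Import structures.
From mathcomp Require Import all_boot all_order all_algebra all_fingroup.
Set Implicit Arguments. Unset Strict Implicit. Unset Printing Implicit Defensive.
Import Order.TTheory GRing.Theory Num.Theory.
Local Open Scope ring_scope.

(* Minimum / maximum of a family indexed by 'I_m (value 0 if m = 0; the
   theorem assumes at least one player). *)
Definition minI (R : realDomainType) (m : nat) : ('I_m -> R) -> R :=
  match m return ('I_m -> R) -> R with
  | 0 => fun _ => 0
  | k.+1 => fun f => \big[Num.min/ f ord0]_(i < k.+1) f i
  end.
Definition maxI (R : realDomainType) (m : nat) : ('I_m -> R) -> R :=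
  match m return ('I_m -> R) -> R with
  | 0 => fun _ => 0
  | k.+1 => fun f => \big[Num.max/ f ord0]_(i < k.+1) f i
  end.

Definition median (R : realFieldType) (s : seq R) : R :=
  let t := sort <=%R s in
  let m := size t in
  if odd m then nth 0 t m./2
  else (nth 0 t m./2.-1 + nth 0 t m./2) / 2%:R.

Definition profile (n : nat) (A : finType) := {ffun 'I_n -> A}.

Section Game.
Variables (R : realFieldType) (n : nat) (A : finType).
Variable u : 'I_n -> profile n A -> R.

Definition distr := {ffun profile n A -> R}.

Definition dominates (x y : 'I_n -> R) : bool := [forall j, y j <= x j].
Definition sdominates (x y : 'I_n -> R) : bool :=
  dominates x y && [exists j, y j < x j].

Definition uvec (x : profile n A) : 'I_n -> R := fun i => u i x.

Definition symmetric_game : Prop :=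
  forall (i : 'I_n) (x : profile n A) (s : {perm 'I_n}),
    u (s i) x = u i [ffun j => x (s j)].

Definition diag (a : A) : profile n A := [ffun => a].

Definition diagonal_game : Prop :=
  forall x : profile n A, exists a : A, dominates (uvec (diag a)) (uvec x).

Definition kantian (a : A) : Prop :=
  forall (i : 'I_n) (b : A), u i (diag b) <= u i (diag a).

Definition pareto_optimal (x : profile n A) : bool :=
  [forall y : profile n A, ~~ sdominates (uvec y) (uvec x)].

Definition distribution (p : distr) : Prop :=
  (forall x, 0 <= p x) /\ \sum_x p x = 1.

Definition supported_on (P : profile n A -> Prop) (p : distr) : Prop :=
  forall x, p x != 0 -> P x.

Definition EU (p : distr) : 'I_n -> R := fun i => \sum_x p x * u i x.

Definition feasPO (p : distr) : Prop :=
  distribution p /\ supported_on (fun x => pareto_optimal x) p.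

Definition maximizer (F : distr -> Prop) (c : distr -> R) (p : distr) : Prop :=
  F p /\ forall q, F q -> c q <= c p.
Definition minimizer (F : distr -> Prop) (c : distr -> R) (p : distr) : Prop :=
  F p /\ forall q, F q -> c p <= c q.

Definition undominated_in (F : distr -> Prop) (p : distr) : Prop :=
  ~ exists q, F q /\ sdominates (EU q) (EU p).

Definition rawlsian (p : distr) : Prop :=
  let F := maximizer feasPO (fun q => minI (EU q)) in F p /\ undominated_in F p.

Definition bentham_harsanyi (p : distr) : Prop :=
  maximizer feasPO (fun q => \sum_i EU q i) p.

Definition best_off (p : distr) : Prop :=
  let F := maximizer feasPO (fun q => maxI (EU q)) in F p /\ undominated_in F p.

Definition percentile (i : 'I_n) (x : profile n A) : R :=
  100%:R * #|[set y | pareto_optimal y & u i x < u i y]|%:R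
    / #|[set y | pareto_optimal y]|%:R.

Definition EPerc (p : distr) : 'I_n -> R :=
  fun i => \sum_x p x * percentile i x.

Definition rawlsian_percentile (p : distr) : Prop :=
  let F := minimizer feasPO (fun q => maxI (EPerc q)) in F p /\ undominated_in F p.

(* natural expectation point: median of i's payoffs over undominated
   (Pareto optimal) pure profiles, counted with multiplicity *)
Definition nat_expectation (i : 'I_n) : R :=
  median [seq u i x | x <- enum [pred x | pareto_optimal x]].

Definition happy (i : 'I_n) (x : profile n A) : bool := nat_expectation i <= u i x.

Definition Punhappy (p : distr) : 'I_n -> R :=
  fun i => \sum_(x | ~~ happy i x) p x.

Definition aspiration (p : distr) : Prop :=
  let F := minimizer distribution (fun q => maxI (Punhappy q)) in
  F p /\ undominated_in F p.

Definition kantian_combination (p : distr) : Prop :=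
  distribution p /\ supported_on (fun x => exists a, x = diag a /\ kantian a) p.

(* The class E of equilibria coincides with the convex combinations of pure
   Kantian equilibria, distributions being identified via their vectors of
   expected utilities: every Kantian combination is in E, and every member of E
   has the same expected-utility vector as some Kantian combination. *)
Definition coincides_with_kantian (E : distr -> Prop) : Prop :=
  (forall p, kantian_combination p -> E p) /\
  (forall p, E p -> exists q, kantian_combination q /\ forall i, EU p i = EU q i).

End Game.

(* Main.v *)
Require Import Defs.
From mathcomp Require Import all_boot all_order all_algebra all_fingroup.
From mathcomp Require Import zify.
Set Implicit Arguments. Unset Strict Implicit. Unset Printing Implicit Defensive.
Import Order.TTheory GRing.Theory Num.Theory.
Local Open Scope ring_scope.

Lemma le_maxI (R : realDomainType) m (f : 'I_m -> R) i : f i <= maxI f.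
Proof.
case: m f i => [|k] f i; first by case: i.
by rewrite /= (bigD1 i) //= le_max lexx.
Qed.

Lemma maxI_le (R : realDomainType) m (f : 'I_m -> R) c :
  0 <= c -> (forall i, f i <= c) -> maxI f <= c.
Proof.
case: m f => [|k] f c0 H //=.
by apply: (big_ind (fun y => y <= c)) => // x y hx hy; rewrite ge_max hx hy.
Qed.

Lemma minI_ext (R : realDomainType) m (f g : 'I_m -> R) :
  (forall i, f i = g i) -> minI f = minI g.
Proof. case: m f g => [|k] f g H //=; rewrite H; exact: eq_bigr. Qed.

Lemma maxI_ext (R : realDomainType) m (f g : 'I_m -> R) :
  (forall i, f i = g i) -> maxI f = maxI g.
Proof. case: m f g => [|k] f g H //=; rewrite H; exact: eq_bigr. Qed.

Section Proof.
Variables (R : realFieldType) (n : nat) (A : finType).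
Variable u : 'I_n -> profile n A -> R.
Hypothesis n0 : (0 < n)%N.
Hypothesis Hsym : symmetric_game u.
Hypothesis Hdiag : diagonal_game u.
Variable a0 : A.

Let i0 : 'I_n := Ordinal n0.

Lemma diag_const a i j : u i (diag n a) = u j (diag n a).
Proof.
have := Hsym i (diag n a) (tperm i j).
rewrite tpermL => ->; congr (u i _); apply/ffunP => k; by rewrite !ffunE.
Qed.

Definition v a := u i0 (diag n a).

Lemma ex_max : exists as_, [forall b, v b <= v as_].
Proof.
case: (@arg_maxP _ _ A a0 xpredT v erefl) => a _ H.
by exists a; apply/forallP => b; apply: H.
Qed.

Definition astar := xchoose ex_max.
Lemma astarP b : v b <= v astar.
Proof. exact: (forallP (xchooseP ex_max)). Qed.
Definition vs := v astar.

Lemma bound x i : u i x <= vs.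
Proof.
have [a /forallP H] := Hdiag x.
apply: le_trans (H i) _; rewrite /uvec (diag_const a i i0); exact: astarP.
Qed.

Lemma kantian_astar : kantian u astar.
Proof. by move=> i b; rewrite (diag_const b i i0) (diag_const astar i i0); exact: astarP. Qed.

Lemma kantian_vs a i : kantian u a -> u i (diag n a) = vs.
Proof.
move=> H; apply/le_anti; rewrite bound /=.
by rewrite /vs /v -(diag_const astar i i0) H.
Qed.

Lemma PO_vs x : pareto_optimal u x -> forall i, u i x = vs.
Proof.
move=> /forallP /(_ (diag n astar)); rewrite /sdominates negb_and => /orP [].
  move/negP; case; apply/forallP => j; rewrite /uvec; rewrite (diag_const astar j i0); exact: bound.
move/existsPn => H i; apply/le_anti; rewrite bound /=.
have := H i; rewrite /uvec (diag_const astar i i0) -/(v astar) -/vs.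
by rewrite -leNgt.
Qed.

Lemma vs_PO x : (forall i, u i x = vs) -> pareto_optimal u x.
Proof.
move=> H; apply/forallP => y; rewrite /sdominates negb_and; apply/orP; right.
by apply/existsPn => j; rewrite /uvec H -leNgt bound.
Qed.

Lemma EU_vs (q : distr R n A) : distribution q ->
  (forall x, q x != 0 -> forall i, u i x = vs) -> forall i, EU u q i = vs.
Proof.
move=> [_ Hs] H i; rewrite /EU.
transitivity (\sum_x q x * vs).
  apply: eq_bigr => x _; case: (eqVneq (q x) 0) => [->|nz]; first by rewrite !mul0r.
  by rewrite H.
by rewrite -mulr_suml Hs mul1r.
Qed.

Lemma feasPO_EU q : feasPO u q -> forall i, EU u q i = vs.
Proof. move=> [Hd Hs]; apply: EU_vs => // x /Hs; exact: PO_vs. Qed.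

Lemma KC_feasPO p : kantian_combination u p -> feasPO u p.
Proof.
move=> [Hd Hs]; split => // x /Hs [a [Hx Ha]]; rewrite Hx; apply: vs_PO => i; exact: kantian_vs.
Qed.

Definition k0 : distr R n A := [ffun x => if x == diag n astar then 1 else 0].

Lemma k0_KC : kantian_combination u k0.
Proof.
split; first split.
- by move=> x; rewrite ffunE; case: ifP.
- rewrite (bigD1 (diag n astar)) //= ffunE eqxx big1 ?addr0 // => x /negbTE hx.
  by rewrite ffunE hx.
- move=> x; rewrite ffunE; case: (x =P diag n astar) => [-> _|_]; last by rewrite eqxx.
  exists astar; split => //.
  exact: kantian_astar.
Qed.

Lemma nsdom p q : (forall i, EU u p i = vs) -> (forall i, EU u q i = vs) ->
  ~~ sdominates (EU u q) (EU u p).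
Proof.
move=> Hp Hq; rewrite /sdominates negb_and; apply/orP; right.
by apply/existsPn => j; rewrite Hp Hq ltxx.
Qed.

Lemma reverse (E : distr R n A -> Prop) : (forall p, E p -> forall i, EU u p i = vs) ->
  forall p, E p -> exists q, kantian_combination u q /\ forall i, EU u p i = EU u q i.
Proof.
move=> H p Ep; exists k0; split; first exact: k0_KC.
move=> i; rewrite H // (feasPO_EU (KC_feasPO k0_KC)) //.
Qed.

Lemma percentile0 i x : pareto_optimal u x -> percentile u i x = 0.
Proof.
move=> Hx; rewrite /percentile.
have -> : [set y | pareto_optimal u y & u i x < u i y] = set0.
  apply/setP => y; rewrite !inE PO_vs // ltNge bound andbF //.
by rewrite cards0 mulr0 mul0r.
Qed.

Lemma EPerc0 q : feasPO u q -> forall i, EPerc u q i = 0.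
Proof.
move=> [_ Hs] i; rewrite /EPerc big1 // => x _.
case: (eqVneq (q x) 0) => [->|nz]; first by rewrite mul0r.
by rewrite percentile0 ?mulr0 //; apply: Hs.
Qed.

Lemma nat_exp i : nat_expectation u i = vs.
Proof.
rewrite /nat_expectation /median.
set s := [seq _ | _ <- _].
set t := sort _ s.
have Ht k : (k < size t)%N -> nth 0 t k = vs.
  move=> hk; have := mem_nth 0 hk; rewrite mem_sort => /mapP [y].
  by rewrite mem_enum inE => /PO_vs H ->.
have hsz : (0 < size t)%N.
  rewrite size_sort size_map -cardE; apply/card_gt0P; exists (diag n astar).
  by rewrite inE; apply: vs_PO => j; apply: kantian_vs; exact: kantian_astar.
case: ifP => ho.
  by apply: Ht; rewrite -divn2 ltn_Pdiv.
have h2 : ((size t)./2 < size t)%N by rewrite -divn2 ltn_Pdiv.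
rewrite !Ht //; last exact: leq_ltn_trans (leq_pred _) h2.
by rewrite -mulr2n -[vs *+ 2]mulr_natr mulfK // pnatr_eq0.
Qed.

Lemma happy_iff i x : happy u i x = (u i x == vs).
Proof. by rewrite /happy nat_exp eq_le bound. Qed.

Lemma Punhappy_ge0 q : distribution q -> forall i, 0 <= Punhappy u q i.
Proof. by move=> [H _] i; apply: sumr_ge0. Qed.

Lemma Punhappy0 q : distribution q -> maxI (Punhappy u q) <= 0 -> forall i, EU u q i = vs.
Proof.
move=> Hd Hm; apply: EU_vs => // x nz i.
have H0 : Punhappy u q i = 0.
  by apply/le_anti; rewrite Punhappy_ge0 // andbT (le_trans (le_maxI _ i)).
apply/eqP; rewrite -happy_iff; apply/negPn/negP => hx; move/eqP: nz; apply.
apply: (psumr_eq0P _ H0) => //; move: Hd => [Hp _] y _; exact: Hp.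
Qed.

Lemma KC_Punhappy p : kantian_combination u p -> maxI (Punhappy u p) <= 0.
Proof.
move=> Hp; apply: maxI_le => // i; rewrite /Punhappy big1 // => x hx.
case: (eqVneq (p x) 0) => // nz; exfalso.
case: (KC_feasPO Hp) => _ /(_ x nz) /PO_vs H.
by move: hx; rewrite happy_iff H eqxx.
Qed.


Lemma c_rawlsian : coincides_with_kantian u (rawlsian u).
Proof.
split.
- move=> p Hp; have Fp := KC_feasPO Hp; split.
    split => // q Fq.
    suff -> : minI (EU u q) = minI (EU u p) by [].
    by apply: minI_ext => i; rewrite !feasPO_EU.
  move=> [q [[Fq _] Hd]]; move: Hd; apply/negP; apply: nsdom; exact: feasPO_EU.
- apply: reverse => p [[Fp _] _]; exact: feasPO_EU.
Qed.

Lemma c_bh : coincides_with_kantian u (bentham_harsanyi u).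
Proof.
split.
- move=> p Hp; have Fp := KC_feasPO Hp; split => // q Fq.
  suff -> : \sum_i EU u q i = \sum_i EU u p i by [].
  by apply: eq_bigr => i _; rewrite !feasPO_EU.
- apply: reverse => p [Fp _]; exact: feasPO_EU.
Qed.

Lemma c_bo : coincides_with_kantian u (best_off u).
Proof.
split.
- move=> p Hp; have Fp := KC_feasPO Hp; split.
    split => // q Fq.
    suff -> : maxI (EU u q) = maxI (EU u p) by [].
    by apply: maxI_ext => i; rewrite !feasPO_EU.
  move=> [q [[Fq _] Hd]]; move: Hd; apply/negP; apply: nsdom; exact: feasPO_EU.
- apply: reverse => p [[Fp _] _]; exact: feasPO_EU.
Qed.

Lemma c_rp : coincides_with_kantian u (rawlsian_percentile u).
Proof.
split.
- move=> p Hp; have Fp := KC_feasPO Hp; split.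
    split => // q Fq.
    suff -> : maxI (EPerc u q) = maxI (EPerc u p) by [].
    by apply: maxI_ext => i; rewrite !EPerc0.
  move=> [q [[Fq _] Hd]]; move: Hd; apply/negP; apply: nsdom; exact: feasPO_EU.
- apply: reverse => p [[Fp _] _]; exact: feasPO_EU.
Qed.

Lemma c_asp : coincides_with_kantian u (aspiration u).
Proof.
split.
- move=> p Hp; have Fp := KC_feasPO Hp; have Dp := Fp.1; split.
    split => // q Dq.
    exact: le_trans (KC_Punhappy Hp) (le_trans (Punhappy_ge0 Dq i0) (le_maxI _ i0)).
  move=> [q [[Dq Hq] Hd]]; move: Hd; apply/negP; apply: nsdom; last first.
    apply: Punhappy0 => //; exact: le_trans (Hq p Dp) (KC_Punhappy Hp).
  exact: feasPO_EU.
- apply: reverse => p [[Dp Hp] _]; apply: Punhappy0 => //.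
  exact: le_trans (Hp k0 (k0_KC.1)) (KC_Punhappy k0_KC).
Qed.

End Proof.

Lemma dist_inhab (R : realFieldType) (n : nat) (A : finType) (n0 : (0 < n)%N)
  (p : distr R n A) : distribution p -> inhabited A.
Proof.
move=> [_ Hs]; case: (pickP (@predT (profile n A))) => [x _|H].
  exact: inhabits (x (Ordinal n0)).
by move: Hs; rewrite big_pred0 // => /eqP; rewrite eq_sym oner_eq0.
Qed.

Lemma lift_c (R : realFieldType) (n : nat) (A : finType) (n0 : (0 < n)%N)
  (u : 'I_n -> profile n A -> R) (E : distr R n A -> Prop) :
  (forall p, E p -> distribution p) -> (A -> coincides_with_kantian u E) ->
  coincides_with_kantian u E.
Proof.
move=> HE H; split => p Hp.
  have [a0] : inhabited A by apply: (dist_inhab n0); exact: Hp.1.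
  by apply: (H a0).1.
have [a0] : inhabited A by apply: (dist_inhab n0); exact: HE p Hp.
by apply: (H a0).2.
Qed.

Theorem theorem7 (R : realFieldType) (n : nat) (A : finType)
    (u : 'I_n -> profile n A -> R) :
  (0 < n)%N -> symmetric_game u -> diagonal_game u ->
  [/\ coincides_with_kantian u (rawlsian u),
      coincides_with_kantian u (bentham_harsanyi u),
      coincides_with_kantian u (best_off u),
      coincides_with_kantian u (rawlsian_percentile u)
    & coincides_with_kantian u (aspiration u)].
Proof.
move=> n0 Hs Hd; split; apply: (lift_c n0).
- by move=> p [[[D _] _] _].
- by move=> a0; exact: c_rawlsian.
- by move=> p [[D _] _].
- by move=> a0; exact: c_bh.
- by move=> p [[[D _] _] _].
- by move=> a0; exact: c_bo.
- by move=> p [[[D _] _] _].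
- by move=> a0; exact: c_rp.
- by move=> p [[D _] _].
- by move=> a0; exact: c_asp.
Qed.
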